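(* For every integer $T\ge 5$ and every $\sigma\in\mathfrak S_3$, the vector $\sigma c$ with $c=[1,0,0,0,0,0]$ defines a facet of $P^T$.
   Context: For an integer $T\ge 2$, let $\Omega_T$ be the set of words $w=s_1s_2\cdots s_T$ over $\{1,2,3\}$ with $s_l\neq s_{l+1}$ for $l=1,\dots,T-1$. For $w\in\Omega_T$ and an ordered pair $ij$, $i\neq j$, let $x_{ij}(w)$ be the number of indices $1\le l\le T-1$ with $s_ls_{l+1}=ij$. Vectors of $\mathbb R^6$ are indexed in the order $[x_{12},x_{13},x_{21},x_{23},x_{31},x_{32}]$. Let $a_w=[x_{12}(w),\dots,x_{32}(w)]$ and $P^T=\mathrm{conv}\{a_w:w\in\Omega_T\}$ (the convex hull of the columns of the design matrix $A^T$). $\mathfrak S_3$ acts on $\mathbb R^6$ by $(\sigma c)_{ij}=c_{\sigma(i)\sigma(j)}$. A vector $c$ defines a facet of $P^T$ if $c\cdot a_w\ge0$ for all $w\in\Omega_T$ and $\{x\in P^T: c\cdot x=0\}$ is a facet of $P^T$. *)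

(* Defs.v *)
From HB Require Import structures.
From mathcomp Require Import all_boot all_order all_algebra all_fingroup.
Set Implicit Arguments. Unset Strict Implicit. Unset Printing Implicit Defensive.
Import Order.TTheory GRing.Theory Num.Theory.
Local Open Scope ring_scope.

(* Letters 1,2,3 are encoded as the ordinals 0,1,2 of 'I_3.
   Coordinates of R^6 are encoded as 'I_6 in the order
   [x12, x13, x21, x23, x31, x32]. *)

Definition coord_pairs : seq (nat * nat) :=
  [:: (0,1); (0,2); (1,0); (1,2); (2,0); (2,1)]%N.

Definition pair_of (k : 'I_6) : nat * nat := nth (0,0)%N coord_pairs k.

Definition coord_of (i j : 'I_3) : 'I_6 :=
  inord (index (nat_of_ord i, nat_of_ord j) coord_pairs).

Definition is_word (T : nat) (w : T.-tuple 'I_3) : bool :=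
  [forall l : 'I_T.-1, nth ord0 w l != nth ord0 w l.+1].

Definition xcount (T : nat) (w : T.-tuple 'I_3) (k : 'I_6) : nat :=
  \sum_(l < T.-1)
     ((nat_of_ord (nth ord0 w l), nat_of_ord (nth ord0 w l.+1)) == pair_of k)%N.

Definition avec (R : realFieldType) (T : nat) (w : T.-tuple 'I_3) : 'rV[R]_6 :=
  \row_k (xcount w k)%:R.

Definition dotp (R : realFieldType) (c x : 'rV[R]_6) : R :=
  \sum_(k < 6) c 0 k * x 0 k.

(* P^T = conv { a_w : w in Omega_T } *)
Definition PT (R : realFieldType) (T : nat) (x : 'rV[R]_6) : Prop :=
  exists lam : {ffun T.-tuple 'I_3 -> R},
    [/\ forall w, 0 <= lam w,
        forall w, ~~ is_word w -> lam w = 0,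
        \sum_w lam w = 1
      & x = \sum_w lam w *: avec R w].

Definition aff_indep (R : realFieldType) (s : seq 'rV[R]_6) : bool :=
  match s with
  | [::] => true
  | p0 :: ps => \rank (\matrix_(i < size ps) (nth 0 ps i - p0)) == size ps
  end.

Definition has_dim (R : realFieldType) (S : 'rV[R]_6 -> Prop) (d : nat) : Prop :=
  (exists s : seq 'rV[R]_6,
      [/\ size s = d.+1, (forall x, x \in s -> S x) & aff_indep s]) /\
  (forall s : seq 'rV[R]_6,
      (forall x, x \in s -> S x) -> aff_indep s -> (size s <= d.+1)%N).

Definition defines_facet (R : realFieldType) (T : nat) (c : 'rV[R]_6) : Prop :=
  (forall w : T.-tuple 'I_3, is_word w -> 0 <= dotp c (avec R w)) /\
  exists d : nat,
    has_dim (@PT R T) d.+1 /\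
    has_dim (fun x => @PT R T x /\ dotp c x = 0) d.

Definition sact (R : realFieldType) (s : 'S_3) (c : 'rV[R]_6) : 'rV[R]_6 :=
  \row_k c 0 (coord_of (s (inord (pair_of k).1)) (s (inord (pair_of k).2))).

Definition c0 (R : realFieldType) : 'rV[R]_6 := \row_(k < 6) (k == 0 :> nat)%:R.

(* Main.v *)
Require Import Defs.
From HB Require Import structures.
From mathcomp Require Import all_boot all_order all_algebra all_fingroup.
From mathcomp Require Import zify ring.
Set Implicit Arguments. Unset Strict Implicit. Unset Printing Implicit Defensive.
Import Order.TTheory GRing.Theory Num.Theory.
Local Open Scope ring_scope.

Definition pr (k : nat) : nat * nat := nth (0,0)%N coord_pairs k.
Definition la (k : nat) : nat := (pr k).1.
Definition lb (k : nat) : nat := (pr k).2.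
Definition lc (k : nat) : nat := (3 - la k - lb k)%N.
Definition pref (k : nat) (j : nat) : seq nat :=
  let a := la k in let b := lb k in let c := lc k in
  nth [::] [:: [:: a;c;a;c]; [:: b;c;a;c]; [:: c;b;a;c]; [:: a;c;b;c]; [:: b;a;c;b]; [:: c;a;b;c]] j.
Definition tailf k (l : nat) : nat := if odd l then lc k else la k.
Definition wfun k j (l : nat) : nat := if (l < 4)%N then nth 0%N (pref k j) l else tailf k l.
Definition trans k j (k' : nat) (l : nat) : nat := ((wfun k j l, wfun k j l.+1) == pr k').
Definition cnt4 k j k' : nat := (trans k j k' 0 + trans k j k' 1 + trans k j k' 2 + trans k j k' 3)%N.
Definition sum6 (g : nat -> int) : int :=
  g 0%N + (g 1%N + (g 2%N + (g 3%N + (g 4%N + (g 5%N + 0))))).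
Definition ind (b : bool) : int := (b : nat)%:Z.
Definition Bz k (j : nat) (p : nat * nat) : int :=
  let a := la k in let b := lb k in let c := lc k in
  match j with
  | 0 => - ind (p == (a,b)) + ind (p == (b,a)) + ind (p == (b,c)) + ind (p == (c,a))
  | 1 => ind (p == (b,a)) + 2 * ind (p == (c,a)) + 2 * ind (p == (c,b))
  | 2 => - ind (p == (b,a)) - ind (p == (c,a))
  | 3 => - ind (p == (c,a)) - ind (p == (c,b))
  | _ => ind (p == (a,b))
  end.
Definition Dz k (i : nat) (k' : nat) : int := (cnt4 k i k')%:Z - (cnt4 k 0 k')%:Z.
Definition check (k : nat) : bool :=
  [&& (la k < 3)%N, (lb k < 3)%N, (lc k < 3)%N, la k != lb k, la k != lc k, lb k != lc k,
   all (fun j => all (fun l => wfun k j l < 3)%N (iota 0 4) &&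
       all (fun l => wfun k j l != wfun k j l.+1) (iota 0 4)) (iota 0 6),
   all (fun j => cnt4 k j k == 0%N) (iota 0 5) &
   all (fun i => all (fun j =>
      sum6 (fun k' => Dz k i.+1 k' * Bz k j (pr k')) == ind (i == j)) (iota 0 5)) (iota 0 5)].
Lemma all_check : all check (iota 0 6).
Proof. vm_compute. reflexivity. Qed.

Local Close Scope ring_scope.
Definition px (k : 'I_6) : 'I_3 := inord (pair_of k).1.
Definition py (k : 'I_6) : 'I_3 := inord (pair_of k).2.
Lemma pair_lt (k : 'I_6) : ((pair_of k).1 < 3) && ((pair_of k).2 < 3).
Proof. by case: k => [[|[|[|[|[|[|//]]]]]] hk]. Qed.
Lemma val_px k : nat_of_ord (px k) = (pair_of k).1.
Proof. by rewrite /px inordK //; case/andP: (pair_lt k). Qed.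
Lemma val_py k : nat_of_ord (py k) = (pair_of k).2.
Proof. by rewrite /py inordK //; case/andP: (pair_lt k). Qed.
Lemma pxy_inj (k k' : 'I_6) : px k = px k' -> py k = py k' -> k = k'.
Proof.
move=> h1 h2; apply: val_inj; move: h1 h2 => /(congr1 (@nat_of_ord 3)) + /(congr1 (@nat_of_ord 3)).
rewrite !val_px !val_py.
by case: k => [[|[|[|[|[|[|//]]]]]] hk]; case: k' => [[|[|[|[|[|[|//]]]]]] hk'].
Qed.
Lemma pxy_neq k : px k != py k.
Proof. by rewrite -(inj_eq (@ord_inj _)) val_px val_py; case: k => [[|[|[|[|[|[|//]]]]]] hk]. Qed.
Lemma pxy_surj (u v : 'I_3) : u != v -> exists k, px k = u /\ py k = v.
Proof.
rewrite -(inj_eq (@ord_inj _)).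
case: u => [[|[|[|//]]] hu]; case: v => [[|[|[|//]]] hv] //= _.
- by exists (@Ordinal 6 0 isT); split; apply: ord_inj; rewrite ?val_px ?val_py.
- by exists (@Ordinal 6 1 isT); split; apply: ord_inj; rewrite ?val_px ?val_py.
- by exists (@Ordinal 6 2 isT); split; apply: ord_inj; rewrite ?val_px ?val_py.
- by exists (@Ordinal 6 3 isT); split; apply: ord_inj; rewrite ?val_px ?val_py.
- by exists (@Ordinal 6 4 isT); split; apply: ord_inj; rewrite ?val_px ?val_py.
- by exists (@Ordinal 6 5 isT); split; apply: ord_inj; rewrite ?val_px ?val_py.
Qed.
Lemma cz (X Y : 'I_3) : X != Y -> ((coord_of X Y : nat) == 0%N) = (((X:nat) == 0%N) && ((Y:nat) == 1%N)).
Proof.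
rewrite -(inj_eq (@ord_inj _)) /coord_of.
by case: X => [[|[|[|//]]] hx]; case: Y => [[|[|[|//]]] hy] //= _; rewrite inordK.
Qed.

Local Open Scope ring_scope.

Definition ev (R : realFieldType) (k0 : 'I_6) : 'rV[R]_6 := \row_k (k == k0)%:R.

Lemma sact_e (R : realFieldType) (s : 'S_3) : exists k0 : 'I_6, sact s (c0 R) = ev R k0.
Proof.
have hne : ((s^-1)%g (inord 0) : 'I_3) != (s^-1)%g (inord 1).
  by rewrite (inj_eq (@perm_inj _ _)) -(inj_eq (@ord_inj _)) !inordK.
case: (pxy_surj hne) => k0 [h1 h2]; exists k0.
apply/matrixP => i k; rewrite !mxE.
rewrite cz; last by rewrite (inj_eq (@perm_inj _ _)) pxy_neq.
congr (_%:R); congr (nat_of_bool _); case: (boolP (k == k0)) => [/eqP -> | hk].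
- rewrite -[inord (pair_of k0).1]/(px k0) -[inord (pair_of k0).2]/(py k0).
  by rewrite h1 h2 !permKV !inordK.
- apply/negbTE/negP => /andP[a b]; move/negP: hk; apply.
  have e1 : px k = px k0.
    rewrite h1 -(permK s (px k)); congr (_ _); apply: ord_inj; rewrite inordK //.
    exact: (eqP a).
  have e2 : py k = py k0.
    rewrite h2 -(permK s (py k)); congr (_ _); apply: ord_inj; rewrite inordK //.
    exact: (eqP b).
  by rewrite (pxy_inj e1 e2).
Qed.

Lemma dotp_e (R : realFieldType) k0 (x : 'rV[R]_6) : dotp (ev R k0) x = x 0 k0.
Proof.
rewrite /dotp (bigD1 k0) //= mxE eqxx mul1r big1 ?addr0 // => k hk.
by rewrite mxE (negbTE hk) mul0r.
Qed.

Definition mkw (F : nat -> 'I_3) (T : nat) : T.-tuple 'I_3 :=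
  Tuple (introT eqP (size_mkseq F T)).
Definition word (k j T : nat) : T.-tuple 'I_3 := mkw (fun l => inord (wfun k j l)) T.

Lemma nth_mkw F T l : (l < T)%N -> nth ord0 (mkw F T) l = F l.
Proof. by move=> h; rewrite /= nth_mkseq. Qed.

Lemma xcount_mkw F T k : xcount (mkw F T) k =
  (\sum_(l < T.-1) (((F l : nat), (F l.+1 : nat)) == pair_of k))%N.
Proof.
apply: eq_bigr => l _; have := ltn_ord l => hl.
by rewrite !nth_mkw //; lia.
Qed.

Definition tailsum k (k' : nat) T : nat :=
  (\sum_(4 <= l < T.-1) ((tailf k l, tailf k l.+1) == pr k'))%N.

Lemma xcount_word k j T (k' : 'I_6) : (forall l, wfun k j l < 3)%N -> (5 <= T)%N ->
  xcount (word k j T) k' = (cnt4 k j k' + tailsum k k' T)%N.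
Proof.
move=> h3 hT; rewrite xcount_mkw.
under eq_bigr => l _ do rewrite !inordK //.
rewrite -(big_mkord xpredT (fun l => ((wfun k j l, wfun k j l.+1) == pair_of k') : nat)).
rewrite (big_cat_nat (leq0n 4)); last by lia.
congr (_ + _)%N.
  by rewrite big_mkord !big_ord_recl big_ord0 /cnt4 /trans /= addn0 !addnA.
rewrite /tailsum; apply: eq_big_nat => l /andP[h4 _].
rewrite /wfun ltnNge h4 /= ltnNge (leq_trans h4 (leqnSn l)) /=.
by [].
Qed.

Lemma avec_diff (R : realFieldType) k j T (k' : 'I_6) :
  (forall l, wfun k j l < 3)%N -> (forall l, wfun k 0 l < 3)%N -> (5 <= T)%N ->
  (avec R (word k j T)) 0 k' - (avec R (word k 0 T)) 0 k' = (Dz k j k')%:~R.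
Proof.
move=> h1 h2 hT; rewrite !mxE !xcount_word // /Dz intrB.
set a := cnt4 k j k'; set b := cnt4 k 0 k'; set t := tailsum k k' T.
rewrite !natrD -!pmulrn /a /b /cnt4 !natrD; ring.
Qed.

Lemma word_is_word k j T : (forall l, wfun k j l < 3)%N ->
  (forall l, wfun k j l != wfun k j l.+1) -> is_word (word k j T).
Proof.
move=> h3 hd; apply/forallP => l; have := ltn_ord l => hl.
rewrite !nth_mkw; try lia.
by rewrite -(inj_eq (@ord_inj _)) !inordK.
Qed.

Lemma inPT (R : realFieldType) T (w : T.-tuple 'I_3) : is_word w -> @PT R T (avec R w).
Proof.
move=> hw; exists [ffun w' => (w' == w)%:R]; split.
- by move=> w'; rewrite ffunE ler0n.
- move=> w' hw'; rewrite ffunE; case: eqP => // E; by rewrite E hw in hw'.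
- rewrite (bigD1 w) //= ffunE eqxx big1 ?addr0 // => w' hw'.
  by rewrite ffunE (negbTE hw').
- rewrite (bigD1 w) //= ffunE eqxx scale1r big1 ?addr0 // => w' hw'.
  by rewrite ffunE (negbTE hw') scale0r.
Qed.

Lemma pair1 (x y : 'I_3) : x != y ->
  (\sum_(k < 6) (((x:nat), (y:nat)) == pair_of k))%N = 1%N.
Proof.
rewrite -(inj_eq (@ord_inj _)) !big_ord_recl big_ord0.
by case: x => [[|[|[|//]]] hx]; case: y => [[|[|[|//]]] hy].
Qed.

Lemma sum_xcount T (w : T.-tuple 'I_3) : is_word w ->
  (\sum_(k < 6) xcount w k)%N = T.-1.
Proof.
move=> /forallP hw; rewrite /xcount exchange_big /=.
rewrite (eq_bigr (fun _ => 1%N)) ?sum1_card ?card_ord // => l _.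
exact: pair1.
Qed.

Lemma PT_sum (R : realFieldType) T x : @PT R T x -> \sum_(k < 6) x 0 k = (T.-1)%:R.
Proof.
case=> lam [h0 hnw h1 ->].
under eq_bigr => k _ do rewrite summxE.
rewrite exchange_big /=.
rewrite (eq_bigr (fun w => lam w * (T.-1)%:R)); first by rewrite -mulr_suml h1 mul1r.
move=> w _; under eq_bigr => k _ do rewrite !mxE.
rewrite -mulr_sumr -natr_sum.
case: (boolP (is_word w)) => hw; first by rewrite sum_xcount.
by rewrite hnw // !mul0r.
Qed.

Lemma aff_mk (R : realFieldType) n (p0 : 'rV[R]_6) (F : nat -> 'rV[R]_6) (B : 'M[R]_(6, n)) :
  (\matrix_(i < n) (F i - p0)) *m B = 1%:M -> aff_indep (p0 :: mkseq F n).
Proof.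
move=> hB; rewrite /aff_indep.
suff H : forall m (e : m = n), \rank (\matrix_(i < m) (nth 0 (mkseq F n) i - p0)) == m.
  by apply: H; rewrite size_mkseq.
move=> m e; subst m.
have -> : \matrix_(i < n) (nth 0 (mkseq F n) i - p0) = \matrix_(i < n) (F i - p0).
  by apply/row_matrixP => i; rewrite !rowK nth_mkseq.
rewrite eqn_leq rank_leq_row /=.
by have := mxrankM_maxl (\matrix_(i < n) (F i - p0)) B; rewrite hB mxrank1.
Qed.

Lemma ub (R : realFieldType) r (S : 'rV[R]_6 -> Prop) (V : 'M[R]_(6, r)) (u : 'rV[R]_r) :
  (forall x, S x -> x *m V = u) -> \rank V = r ->
  forall s, (forall x, x \in s -> S x) -> aff_indep s -> (size s + r <= 7)%N.
Proof.
move=> hV hr [|p0 ps] hs /=.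
  by move=> _; have := rank_leq_row V; rewrite hr; lia.
move/eqP => hrk.
set M := \matrix_(i < size ps) (nth 0 ps i - p0).
have hM : M *m V = 0.
  apply/row_matrixP => i; rewrite row_mul rowK row0 mulmxBl !hV ?subrr //.
    by apply: hs; rewrite inE eqxx.
  by apply: hs; rewrite inE mem_nth ?orbT.
have := mxrank_mul_min M V; rewrite hM mxrank0 hrk hr.
have := rank_leq_row V; rewrite hr; lia.
Qed.

Lemma rank_W (R : realFieldType) r (V : 'M[R]_(6, r)) (W : 'M[R]_(r, 6)) :
  W *m V = 1%:M -> \rank V = r.
Proof.
move=> h; apply/eqP; rewrite eqn_leq rank_leq_col /=.
by have := mxrankM_maxr W V; rewrite h mxrank1.
Qed.

Lemma sum_delta (R : realFieldType) (k1 : 'I_6) (f : 'I_6 -> R) :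
  \sum_(k < 6) (k == k1)%:R * f k = f k1.
Proof.
rewrite (bigD1 k1) //= eqxx mul1r big1 ?addr0 // => k hk.
by rewrite (negbTE hk) mul0r.
Qed.

Definition V1 (R : realFieldType) : 'M[R]_(6, 1) := \matrix_(k < 6, j < 1) 1.
Definition V2 (R : realFieldType) (k0 : 'I_6) : 'M[R]_(6, 2) :=
  \matrix_(k < 6, j < 2) (if j == 0 :> nat then 1 else (k == k0)%:R).

Lemma rank_V1 (R : realFieldType) : \rank (V1 R) = 1%N.
Proof.
apply: (@rank_W _ _ _ (\matrix_(i < 1, k < 6) (k == ord0)%:R)).
apply/matrixP => i j; rewrite !mxE !ord1 /=.
by under eq_bigr => k _ do rewrite !mxE; rewrite (sum_delta ord0 (fun _ => 1)).
Qed.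

Lemma rank_V2 (R : realFieldType) k0 : \rank (V2 R k0) = 2%N.
Proof.
pose k1 : 'I_6 := if k0 == ord0 then inord 1 else ord0.
have hk : k1 != k0.
  rewrite /k1; case: (boolP (k0 == ord0)) => [/eqP ->|h] /=; last by rewrite eq_sym.
  by rewrite -(inj_eq (@ord_inj _)) inordK.
apply: (@rank_W _ _ _ (\matrix_(i < 2, k < 6)
   (if i == 0 :> nat then (k == k1)%:R else (k == k0)%:R - (k == k1)%:R))).
apply/matrixP => i j; rewrite !mxE.
under eq_bigr => k _ do rewrite !mxE.
case: i => [[|[|//]] hi]; case: j => [[|[|//]] hj] /=.
- by rewrite sum_delta.
- by rewrite sum_delta (negbTE hk).
- under eq_bigr => k _ do rewrite mulrBl.
  by rewrite sumrB !sum_delta subrr.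
- under eq_bigr => k _ do rewrite mulrBl.
  by rewrite sumrB !sum_delta eqxx (negbTE hk) subr0.
Qed.

Lemma check_unpack k : check k ->
  [/\ (forall j l, j < 6 -> wfun k j l < 3)%N,
      (forall j l, j < 6 -> wfun k j l != wfun k j l.+1)%N,
      (forall j, j < 5 -> cnt4 k j k = 0)%N,
      (la k != lb k) /\ (lb k != lc k) &
      (forall i j, (i < 5)%N -> (j < 5)%N ->
         sum6 (fun k' => Dz k i.+1 k' * Bz k j (pr k')) = ind (i == j))].
Proof.
case/and5P => h1 h2 h3 h4 /and5P[h5 h6 /allP hw /allP hz /allP hm].
have hw' : forall j, (j < 6)%N -> (forall l, (l < 4)%N -> (wfun k j l < 3)%N /\ wfun k j l != wfun k j l.+1).
  move=> j hj l hl.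
  have := hw j; rewrite mem_iota => /(_ hj) /andP[/allP ha /allP hb].
  have := ha l; have := hb l; rewrite !mem_iota => /(_ hl) c /(_ hl) d.
  by [].
split.
- move=> j l hj; case: (ltnP l 4) => hl; first by case: (hw' j hj l hl).
  by rewrite /wfun (ltnNge l 4) hl /= /tailf; case: (odd l).
- move=> j l hj; case: (ltnP l 4) => hl; first by case: (hw' j hj l hl).
  rewrite /wfun (ltnNge l 4) hl (ltnNge l.+1 4) (leq_trans hl (leqnSn l)) /= /tailf /=.
  by case: (odd l) => /=; rewrite // eq_sym.
- move=> j hj; have := hz j; rewrite mem_iota => /(_ hj).
  by move/eqP.
- by [].
- move=> i j hi hj; have := hm i; rewrite mem_iota => /(_ hi) /allP hm'.
  by have := hm' j; rewrite mem_iota => /(_ hj) /eqP.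
Qed.

Lemma sum6E (G : nat -> int) : \sum_(k < 6) G k = sum6 G.
Proof. by rewrite !big_ord_recl big_ord0. Qed.

Lemma sum_intr (R : realFieldType) (G : 'I_6 -> int) :
  \sum_(k < 6) (G k)%:~R = (\sum_(k < 6) G k)%:~R :> R.
Proof. by rewrite (big_morph (fun z : int => z%:~R : R) (@intrD R) (mulr0z 1)). Qed.

Lemma avec_diff' (R : realFieldType) k j T (k' : 'I_6) :
  (forall l, wfun k j l < 3)%N -> (forall l, wfun k 0 l < 3)%N -> (5 <= T)%N ->
  (xcount (word k j T) k')%:R - (xcount (word k 0 T) k')%:R = (Dz k j k')%:~R :> R.
Proof. by move=> *; have := @avec_diff R k j T k'; rewrite !mxE; apply. Qed.

Lemma MB (R : realFieldType) (k : 'I_6) T n : check k -> (5 <= T)%N -> (n <= 5)%N ->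
  (\matrix_(i < n) (avec R (word k i.+1 T) - avec R (word k 0 T))) *m
  (\matrix_(k' < 6, j < n) (Bz k j (pr k'))%:~R) = 1%:M.
Proof.
move=> /check_unpack [hw _ _ _ hm] hT hn.
apply/matrixP => i j; rewrite !mxE.
have hi : (i < 5)%N by apply: leq_trans (ltn_ord i) hn.
have hj : (j < 5)%N by apply: leq_trans (ltn_ord j) hn.
have hwi : forall l, (wfun k i.+1 l < 3)%N by move=> l; exact: hw.
have hw0 : forall l, (wfun k 0 l < 3)%N by move=> l; exact: hw.
under eq_bigr => k' _ do rewrite !mxE (avec_diff' _ _ hwi hw0 hT) -intrM.
by rewrite sum_intr (sum6E (fun m => Dz k i.+1 m * Bz k j (pr m))) hm.
Qed.

Lemma PT_V1 (R : realFieldType) T x : @PT R T x -> x *m V1 R = \row_(j < 1) (T.-1)%:R.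
Proof.
move=> h; apply/matrixP => i j; rewrite !mxE -(PT_sum h) !ord1.
by apply: eq_bigr => k _; rewrite mxE mulr1.
Qed.

Lemma face_V2 (R : realFieldType) T k0 x : @PT R T x -> dotp (ev R k0) x = 0 ->
  x *m V2 R k0 = \row_(j < 2) (if j == 0 :> nat then (T.-1)%:R else 0).
Proof.
move=> h; rewrite dotp_e => hd; apply/matrixP => i j; rewrite !mxE !ord1.
case: j => [[|[|//]] hj] /=.
  by rewrite -(PT_sum h); apply: eq_bigr => k _; rewrite mxE mulr1.
under eq_bigr => k _ do rewrite mxE mulrC.
by rewrite sum_delta.
Qed.

Lemma tail0 k T : la k != lb k -> lb k != lc k -> tailsum k k T = 0%N.
Proof.
move=> hab hbc; rewrite /tailsum big1 // => l _.
have hp : pr k = (la k, lb k) by rewrite /la /lb; case: (pr k).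
rewrite hp xpair_eqE /tailf /=.
case: (odd l) => /=; first by rewrite (negbTE hab) andbF.
by rewrite eq_sym (negbTE hbc) andbF.
Qed.

Theorem proposition5 (R : realFieldType) (T : nat) (s : 'S_3) :
  (5 <= T)%N -> @defines_facet R T (sact s (c0 R)).
Proof.
move=> hT.
case: (sact_e R s) => k0 ->.
have hc : check k0.
  by apply: (allP all_check); rewrite mem_iota leq0n add0n ltn_ord.
have [hw hd hz [hab hbc] _] := check_unpack hc.
have hword : forall j, (j < 6)%N -> is_word (word k0 j T).
  by move=> j hj; apply: word_is_word => l; [exact: hw | exact: hd].
split.
  by move=> w _; rewrite dotp_e mxE ler0n.
exists 4%N; split; split.
- exists (avec R (word k0 0 T) :: mkseq (fun j => avec R (word k0 j.+1 T)) 5); split => //.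
    move=> x; rewrite inE => /orP[/eqP -> | /mapP[j hj ->]]; first exact/inPT/hword.
    by apply/inPT/hword; move: hj; rewrite mem_iota.
  apply: aff_mk; exact: MB.
- move=> s0 hs hai; by have := ub (@PT_V1 R T) (rank_V1 R) hs hai; rewrite addn1.
- exists (avec R (word k0 0 T) :: mkseq (fun j => avec R (word k0 j.+1 T)) 4); split => //.
    move=> x; rewrite inE => /orP[/eqP -> | /mapP[j hj ->]].
      split; first exact/inPT/hword.
      by rewrite dotp_e mxE xcount_word ?hz ?tail0 //; move=> l; exact: hw.
    move: hj; rewrite mem_iota /= => hj.
    split; first by apply/inPT/hword; lia.
    rewrite dotp_e mxE xcount_word ?hz ?tail0 //; try lia.
    by move=> l; apply: hw; lia.
  apply: aff_mk; exact: MB.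
- move=> s0 hs hai.
  have := @ub R 2 _ _ _ (fun x (hx : @PT R T x /\ dotp (ev R k0) x = 0) => @face_V2 R T k0 x (proj1 hx) (proj2 hx)) (rank_V2 R k0) s0 hs hai.
  by rewrite addn2.
Qed.
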